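(* Let $\mathbf A\le\mathbf B$ be fields and let $\mathsf F$ be the class of all fields. Then $\mathsf d_{\mathsf F}(\mathbf A,\mathbf B)=B\cap\mathrm{Sg}^{\mathsf{acl}(\mathbf B)^+}(A)$; that is, it consists of the elements of $B$ lying in the least subfield of the algebraic closure of $\mathbf B$ that contains $A$ and, if $\mathbf B$ has prime characteristic $p$, is closed under $p$-th roots.
   Context: For a class $\mathsf K$ of rings and $\mathbf A\le\mathbf B\in\mathsf K$, the dominion $\mathsf d_{\mathsf K}(\mathbf A,\mathbf B)$ is the set of $b\in B$ with $g(b)=h(b)$ for all ring homomorphisms $g,h:\mathbf B\to\mathbf C$ with $\mathbf C\in\mathsf K$ and $g{\restriction}_A=h{\restriction}_A$. $\mathsf{acl}(\mathbf B)$ is the algebraic closure of $\mathbf B$. For an algebraically closed field $\mathbf D$, $\mathbf D^+$ is its expansion by the weak inverse ($a^*=a^{-1}$ if $a\ne0$, $0^*=0$) and, for each prime $p$, the weak $p$-root $r_p$ ($r_p(a)=\sqrt[p]{a}$ if the characteristic is $p$, else $0$). $\mathrm{Sg}^{\mathbf D^+}(X)$ is the subalgebra generated by $X$ in the language $\{+,\cdot,-,0,1,(\,)^*\}\cup\{r_p\}$. *)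

(* Defs.v *)
From HB Require Import structures.
From mathcomp Require Import all_boot all_order all_algebra.
Set Implicit Arguments. Unset Strict Implicit. Unset Printing Implicit Defensive.
Import GRing.Theory.
Local Open Scope ring_scope.

Definition dominion_F (B : fieldType) (A : {pred B}) : B -> Prop :=
  fun b => forall (C : fieldType) (g h : {rmorphism B -> C}),
    {in A, forall a, g a = h a} -> g b = h b.

(* Graph of the weak p-root r_p on a field D: r_p(a) is the p-th root of a if
   char D = p, and 0 otherwise. *)
Definition weak_proot (D : fieldType) (p : nat) (a b : D) : Prop :=
  if p \in [pchar D] then b ^+ p = a else b = 0.

(* S is a subuniverse of D^+ : closed under +, *, -, 0, 1, weak inverse
   (MathComp's x^-1, with 0^-1 = 0 in a field), and all weak p-roots. *)
Definition plus_closed (D : fieldType) (S : D -> Prop) : Prop :=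
  S 0 /\ S 1 /\
  (forall x y, S x -> S y -> S (x + y)) /\
  (forall x y, S x -> S y -> S (x * y)) /\
  (forall x, S x -> S (- x)) /\
  (forall x, S x -> S (x^-1)) /\
  (forall p, prime p -> forall a b, S a -> weak_proot p a b -> S b).

Definition Sg_plus (D : fieldType) (X : D -> Prop) : D -> Prop :=
  fun x => forall S : D -> Prop, plus_closed S -> (forall y, X y -> S y) -> S x.

Definition is_acl (B : fieldType) (L : closedFieldType) (iota : {rmorphism B -> L}) : Prop :=
  forall x : L, exists2 q : {poly B}, q != 0 & root (map_poly iota q) x.

(* Main.v *)
Require Import Defs.
From HB Require Import structures.
From mathcomp Require Import all_boot all_order all_algebra.
From mathcomp Require boolp classical_sets.
From mathcomp Require Import ring zify.
Set Implicit Arguments. Unset Strict Implicit. Unset Printing Implicit Defensive.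
Import GRing.Theory.
Local Open Scope ring_scope.

Section SubF.
Variables (F : fieldType) (S : divringClosed F).
Inductive subF := mkSF x & x \in S.
Definition vSF u := let: mkSF x _ := u in x.
Lemma vSFP u : vSF u \in S. Proof. by case: u. Qed.
HB.instance Definition _ := [isSub for vSF].
HB.instance Definition _ := [Choice of subF by <:].
HB.instance Definition _ := [SubChoice_isSubComUnitRing of subF by <:].
HB.instance Definition _ := [SubComUnitRing_isSubIntegralDomain of subF by <:].
HB.instance Definition _ := [SubIntegralDomain_isSubField of subF by <:].
End SubF.

Definition mkDC (F : fieldType) (E : {pred F}) (pf : divring_closed E) : divringClosed F :=
  HB.pack_for (divringClosed F) E (GRing.isDivringClosed.Build F E pf).

Lemma mkDCE (F : fieldType) (E : {pred F}) (pf : divring_closed E) x :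
  (x \in mkDC pf) = (x \in E).
Proof. by []. Qed.

Section Frob.
Variables (K : fieldType) (p : nat) (Kp : p \in [pchar K]).

Lemma charnat n : [pchar K].-nat (p ^ n)%N.
Proof. by rewrite pnatX (pnatE _ (pcharf_prime Kp)) Kp. Qed.

Lemma frobD n (x y : K) : (x + y) ^+ (p ^ n)%N = x ^+ (p ^ n)%N + y ^+ (p ^ n)%N.
Proof. exact: exprDn_pchar (charnat n). Qed.

Lemma frobN n (x : K) : (- x) ^+ (p ^ n)%N = - x ^+ (p ^ n)%N.
Proof. exact: exprNn_pchar (charnat n). Qed.

Lemma frobB n (x y : K) : (x - y) ^+ (p ^ n)%N = x ^+ (p ^ n)%N - y ^+ (p ^ n)%N.
Proof. by rewrite frobD frobN. Qed.

Lemma frob_inj n : injective (fun x : K => x ^+ (p ^ n)%N).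
Proof.
move=> x y /= e; apply/eqP; rewrite -subr_eq0.
have : (x - y) ^+ (p ^ n)%N == 0 by rewrite frobB e subrr.
by rewrite expf_eq0 => /andP[].
Qed.
End Frob.
Definition ce (K : fieldType) : nat :=
  match boolp.pselect (exists p, p \in [pchar K]) with
  | left h => xchoose h | right _ => 1%N end.

Lemma ceP (K : fieldType) :
  (ce K \in [pchar K]) \/ (ce K = 1%N /\ forall p, p \notin [pchar K]).
Proof.
rewrite /ce; case: boolp.pselect => [h|h]; first by left; exact: (xchooseP h).
by right; split=> // p; apply/negP => hp; apply: h; exists p.
Qed.

Section PW.
Variables (B : fieldType) (K : fieldType) (hK : [pchar K] =i [pchar B]).
Local Notation q := (ce B).

Lemma pwD n (x y : K) : (x + y) ^+ (q ^ n)%N = x ^+ (q ^ n)%N + y ^+ (q ^ n)%N.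
Proof.
case: (ceP B) => [Bq|[-> _]]; last by rewrite exp1n !expr1.
by apply: frobD; rewrite hK.
Qed.

Lemma pwN n (x : K) : (- x) ^+ (q ^ n)%N = - x ^+ (q ^ n)%N.
Proof.
case: (ceP B) => [Bq|[-> _]]; last by rewrite exp1n !expr1.
by apply: frobN; rewrite hK.
Qed.

Lemma pw_inj n : injective (fun x : K => x ^+ (q ^ n)%N).
Proof.
case: (ceP B) => [Bq|[-> _]]; last by move=> x y /=; rewrite exp1n !expr1.
by apply: frob_inj; rewrite hK.
Qed.

Lemma pw_root p (a b : K) : prime p -> weak_proot p a b ->
  (b = 0) \/ (b ^+ q = a).
Proof.
move=> pp; rewrite /weak_proot; case: ifP => [pK|_]; last by left.
right; case: (ceP B) => [Bq|[_ nB]]; last by move: pK; rewrite hK (negbTE (nB p)).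
have := pcharf_eq Bq; move/(_ p); rewrite -hK pK => /esym.
by rewrite inE => /eqP <-.
Qed.

Lemma pw_root2 (z : K) : exists2 p, prime p & weak_proot p (z ^+ q) z \/ q = 1%N.
Proof.
case: (ceP B) => [Bq|[-> _]]; last by exists 2%N => //; right.
exists q; first exact: pcharf_prime Bq.
by left; rewrite /weak_proot hK Bq.
Qed.
End PW.
Section Easy.
Variables (B : fieldType) (A : {pred B}) (Apf : divring_closed A)
  (L : closedFieldType) (iota : {rmorphism B -> L}).
Let AS := mkDC Apf.
Local Notation q := (ce B).
Let X := fun y : L => exists2 a, a \in A & y = iota a.
Let hL : [pchar L] =i [pchar B] := fmorph_pchar iota.

Lemma Sg_sub b : Sg_plus X (iota b) -> exists n, b ^+ (q ^ n)%N \in A.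
Proof.
pose S := fun z : L => exists n, exists2 a, a \in AS & z ^+ (q ^ n)%N = iota a.
have SX : forall y, X y -> S y.
  by move=> y [a aA ->]; exists 0%N, a; rewrite // expn0 expr1.
have Scl : plus_closed S.
  split; first by exists 0%N, 0; rewrite ?rpred0 // expn0 expr1 rmorph0.
  split; first by exists 0%N, 1; rewrite ?rpred1 // expn0 expr1 rmorph1.
  split.
    move=> x y [n [a aA ea]] [m [c cA ec]]; exists (n + m)%N.
    exists (a ^+ (q ^ m)%N + c ^+ (q ^ n)%N); first by rewrite rpredD ?rpredX.
    rewrite pwD // expnD rmorphD !rmorphXn -ea -ec -!exprM; congr (_ + _).
    by rewrite mulnC.
  split.
    move=> x y [n [a aA ea]] [m [c cA ec]]; exists (n + m)%N.
    exists (a ^+ (q ^ m)%N * c ^+ (q ^ n)%N); first by rewrite rpredM ?rpredX.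
    rewrite exprMn expnD rmorphM !rmorphXn -ea -ec -!exprM; congr (_ * _).
    by rewrite mulnC.
  split.
    move=> x [n [a aA ea]]; exists n, (- a); first by rewrite rpredN.
    by rewrite pwN // ea rmorphN.
  split.
    move=> x [n [a aA ea]]; exists n, (a ^-1); first by rewrite rpredV.
    by rewrite exprVn ea fmorphV.
  move=> p pp a b' [n [c cA ec]] /(pw_root hL pp) [->|eb].
    by exists 0%N, 0; rewrite ?rpred0 // expn0 expr1 rmorph0.
  exists n.+1, c => //; by rewrite expnS exprM eb.
move=> /(_ S Scl SX) [n [a aA ea]]; exists n.
by move: ea; rewrite -rmorphXn => /fmorph_inj ->.
Qed.

Lemma cond_Sg b n : b ^+ (q ^ n)%N \in A -> Sg_plus X (iota b).
Proof.
move=> bA S Scl SX.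
have: S (iota b ^+ (q ^ n)%N) by apply: SX; exists (b ^+ (q ^ n)%N); rewrite ?rmorphXn.
clear bA; elim: n (iota b) => [|n IH] z; first by rewrite expn0 expr1.
rewrite expnS exprM => /IH Szq.
have [p pp [wp|q1]] := pw_root2 hL z; last by move: Szq; rewrite q1 expr1.
by case: Scl => _ [_ [_ [_ [_ [_ Hr]]]]]; apply: Hr wp.
Qed.

Lemma dom_of b n : b ^+ (q ^ n)%N \in A -> dominion_F A b.
Proof.
move=> bA C g h agh.
have hC : [pchar C] =i [pchar B] := fmorph_pchar g.
apply: (pw_inj hC (n := n)) => /=.
by rewrite -!rmorphXn agh.
Qed.
End Easy.
Section Hard1.
Variables (B : fieldType) (L : closedFieldType) (iota : {rmorphism B -> L}).

Record morph_on (E : {pred B}) (f : B -> L) : Prop := MorphOn {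
  mo1 : f 1 = 1;
  moB : {in E &, {morph f : x y / x - y}};
  moM : {in E &, {morph f : x y / x * y}} }.

Section Psi.
Variables (E : divringClosed B) (f : B -> L) (hf : morph_on E f).
Definition psi (u : subF E) : L := let _ := hf in f (val u).
Lemma psiE u : psi u = f (val u). Proof. by []. Qed.
Lemma psi_zmod : zmod_morphism psi.
Proof. by move=> u v; rewrite !psiE rmorphB /= (moB hf) ?vSFP. Qed.
Lemma psi_mon : monoid_morphism psi.
Proof.
rewrite /monoid_morphism; split; first by rewrite psiE rmorph1 (mo1 hf).
by move=> u v; rewrite !psiE rmorphM /= (moM hf) ?vSFP.
Qed.
HB.instance Definition _ := GRing.isZmodMorphism.Build _ _ psi psi_zmod.
HB.instance Definition _ := GRing.isMonoidMorphism.Build _ _ psi psi_mon.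
End Psi.


Definition algB (E : divringClosed B) (x : B) := algebraicOver (val : subF E -> B) x.
Definition algL (E : divringClosed B) (u : L) := algebraicOver (iota \o val : subF E -> L) u.

End Hard1.
Section Incl.
Variables (B : fieldType) (E E' : divringClosed B) (sEE : {subset E <= E'}).
Definition incl (w : subF E) : subF E' := mkSF (sEE (vSFP w)).
Lemma inclE w : val (incl w) = val w. Proof. by []. Qed.
Lemma incl_zmod : zmod_morphism incl.
Proof. by move=> u v; apply: val_inj; rewrite rmorphB. Qed.
Lemma incl_mon : monoid_morphism incl.
Proof.
rewrite /monoid_morphism; split; first by apply: val_inj; rewrite rmorph1.
by move=> u v; apply: val_inj; rewrite rmorphM.
Qed.
HB.instance Definition _ := GRing.isZmodMorphism.Build _ _ incl incl_zmod.
HB.instance Definition _ := GRing.isMonoidMorphism.Build _ _ incl incl_mon.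
End Incl.

Section Alg.
Variables (B : fieldType) (L : closedFieldType) (iota : {rmorphism B -> L}).
Local Notation algL := (algL iota).

Lemma algL_iota (E : divringClosed B) x : x \in E -> algL E (iota x).
Proof. by move=> hx; have := algebraic_id (iota \o val) (mkSF hx). Qed.

Lemma algB_id (E : divringClosed B) x : x \in E -> algB E x.
Proof. by move=> hx; have := algebraic_id (val : {rmorphism subF E -> B}) (mkSF hx). Qed.

Lemma algL_B (E : divringClosed B) x : algL E (iota x) -> algB E x.
Proof.
case=> p p0 hr; exists p => //.
by move: hr; rewrite map_poly_comp fmorph_root.
Qed.

Lemma algL_mono (E E' : divringClosed B) : {subset E <= E'} ->
  forall u, algL E u -> algL E' u.
Proof.
move=> sEE u [p p0 hr]; exists (map_poly (incl sEE) p); first by rewrite map_poly_eq0.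
rewrite -map_poly_comp.
by rewrite (@eq_map_poly _ _ _ (iota \o val)).
Qed.

Lemma algL_root (E : divringClosed B) (P : {poly L}) u :
  P != 0 -> root P u -> (forall i, algL E P`_i) -> algL E u.
Proof.
move=> P0 hr hc; apply/integral_algebraic; apply: integral_root P0 hr _.
move=> z /(nthP 0) [i _ <-]; exact/integral_algebraic/hc.
Qed.

Lemma algL_horner (E : divringClosed B) (P : {poly L}) u :
  (forall i, algL E P`_i) -> algL E u -> algL E P.[u].
Proof.
move=> hc hu; apply/integral_algebraic; apply: integral_horner; last exact/integral_algebraic/hu.
move=> z /(nthP 0) [i _ <-]; exact/integral_algebraic/hc.
Qed.
End Alg.
Section Ext.
Variables (B : fieldType) (L : closedFieldType) (iota : {rmorphism B -> L}).
Variables (E : divringClosed B) (f : B -> L) (hf : morph_on E f) (x : B) (y : L).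
Local Notation SE := (subF E).
Local Notation ps := (psi hf).

Definition ev (P : {poly SE}) : B := (map_poly val P).[x].
Definition evL (P : {poly SE}) : L := (map_poly ps P).[y].

Lemma evM P Q : ev (P * Q) = ev P * ev Q. Proof. by rewrite /ev rmorphM hornerM. Qed.
Lemma evB P Q : ev (P - Q) = ev P - ev Q. Proof. by rewrite /ev rmorphB hornerD hornerN. Qed.
Lemma ev1 : ev 1 = 1. Proof. by rewrite /ev rmorph1 hornerC. Qed.
Lemma evC c : ev c%:P = val c. Proof. by rewrite /ev map_polyC hornerC. Qed.
Lemma evX : ev 'X = x. Proof. by rewrite /ev map_polyX hornerX. Qed.
Lemma evLM P Q : evL (P * Q) = evL P * evL Q. Proof. by rewrite /evL rmorphM hornerM. Qed.
Lemma evLB P Q : evL (P - Q) = evL P - evL Q. Proof. by rewrite /evL rmorphB hornerD hornerN. Qed.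
Lemma evL1 : evL 1 = 1. Proof. by rewrite /evL rmorph1 hornerC. Qed.
Lemma evLC c : evL c%:P = f (val c). Proof. by rewrite /evL map_polyC hornerC. Qed.
Lemma evLX : evL 'X = y. Proof. by rewrite /evL map_polyX hornerX. Qed.

Definition rep (z : B) (PR : {poly SE} * {poly SE}) :=
  ev PR.2 != 0 /\ z = ev PR.1 / ev PR.2.
Definition adj_pred : {pred B} := fun z => boolp.asbool (exists PR, rep z PR).

Lemma adjP z : (z \in adj_pred) <-> exists PR, rep z PR.
Proof. by rewrite unfold_in /adj_pred; split => [/boolp.asboolP|h]; last apply/boolp.asboolP. Qed.

Lemma repB z1 z2 P1 R1 P2 R2 : rep z1 (P1, R1) -> rep z2 (P2, R2) ->
  rep (z1 - z2) (P1 * R2 - P2 * R1, R1 * R2).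
Proof.
move=> [/= h1 ->] [/= h2 ->]; split => /=; first by rewrite evM mulf_neq0.
rewrite evB !evM; field; by rewrite h1 h2.
Qed.

Lemma repM z1 z2 P1 R1 P2 R2 : rep z1 (P1, R1) -> rep z2 (P2, R2) ->
  rep (z1 * z2) (P1 * P2, R1 * R2).
Proof.
move=> [/= h1 ->] [/= h2 ->]; split => /=; first by rewrite evM mulf_neq0.
rewrite !evM; field; by rewrite h1 h2.
Qed.

Lemma repD z1 z2 P1 R1 P2 R2 : rep z1 (P1, R1) -> rep z2 (P2, R2) -> z2 != 0 ->
  rep (z1 / z2) (P1 * R2, R1 * P2).
Proof.
move=> [/= h1 ->] [/= h2 ->] hz; have hP2 : ev P2 != 0.
  by apply: contraNneq hz => ->; rewrite mul0r.
split => /=; first by rewrite evM mulf_neq0.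
rewrite !evM; field; by rewrite h1 h2 hP2.
Qed.

Lemma rep1 : rep 1 (1, 1). Proof. by split; rewrite /= ev1 ?oner_neq0 ?divr1. Qed.
Lemma rep0 : rep 0 (0, 1).
Proof. by split; rewrite /= ev1 ?oner_neq0 ?divr1 // /ev rmorph0 horner0. Qed.
Lemma repE e (he : e \in E) : rep e ((mkSF he)%:P, 1).
Proof. by split; rewrite /= ev1 ?oner_neq0 ?divr1 // evC. Qed.
Lemma repX : rep x ('X, 1).
Proof. by split; rewrite /= ev1 ?oner_neq0 ?divr1 // evX. Qed.

Lemma adj_closed : divring_closed adj_pred.
Proof.
split; first by apply/adjP; exists (1, 1); exact: rep1.
  move=> z1 z2 /adjP [[P1 R1] h1] /adjP [[P2 R2] h2]; apply/adjP.
  by eexists; apply: repB h1 h2.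
move=> z1 z2 /adjP [[P1 R1] h1] /adjP [[P2 R2] h2]; apply/adjP.
have [->|hz] := eqVneq z2 0; first by rewrite invr0 mulr0; exists (0, 1); exact: rep0.
by eexists; apply: repD h1 h2 hz.
Qed.

Definition adjE := mkDC adj_closed.

Lemma sub_adj : {subset E <= adjE}.
Proof. by move=> e he; rewrite mkDCE; apply/adjP; eexists; exact: repE. Qed.
Lemma x_adj : x \in adjE.
Proof. by rewrite mkDCE; apply/adjP; eexists; exact: repX. Qed.

Definition fext (z : B) : L :=
  match boolp.pselect (exists PR, rep z PR) with
  | left h => let PR := sval (boolp.cid h) in evL PR.1 / evL PR.2
  | right _ => f z end.

Hypothesis H : forall P, (ev P == 0) = (evL P == 0).

Lemma evL_neq0 P : ev P != 0 -> evL P != 0. Proof. by rewrite H. Qed.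

Lemma fext_rep z P R : rep z (P, R) -> fext z = evL P / evL R.
Proof.
move=> hz; rewrite /fext; case: boolp.pselect => [h|nh]; last by exfalso; apply: nh; exists (P, R).
case: (boolp.cid h) => [[P' R']] hz' /=.
case: hz => [/= hR ez]; case: hz' => [/= hR' ez'].
apply/eqP; rewrite eqr_div ?evL_neq0 //; apply/eqP.
apply/eqP; rewrite -subr_eq0 -evLM -evLM -evLB -H evB !evM subr_eq0.
by rewrite -eqr_div // -ez -ez'.
Qed.

Lemma fext_morph : morph_on adjE fext.
Proof.
split.
- by rewrite (fext_rep rep1) evL1 divr1.
- move=> z1 z2; rewrite !mkDCE => /adjP [[P1 R1] h1] /adjP [[P2 R2] h2].
  rewrite (fext_rep (repB h1 h2)) (fext_rep h1) (fext_rep h2) evLB !evLM.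
  have n1 := evL_neq0 h1.1; have n2 := evL_neq0 h2.1.
  field; by rewrite n1 n2.
- move=> z1 z2; rewrite !mkDCE => /adjP [[P1 R1] h1] /adjP [[P2 R2] h2].
  rewrite (fext_rep (repM h1 h2)) (fext_rep h1) (fext_rep h2) !evLM.
  have n1 := evL_neq0 h1.1; have n2 := evL_neq0 h2.1.
  field; by rewrite n1 n2.
Qed.

Lemma fext_E e : e \in E -> fext e = f e.
Proof. by move=> he; rewrite (fext_rep (repE he)) evL1 divr1 evLC. Qed.

Lemma fext_x : fext x = y.
Proof. by rewrite (fext_rep repX) evL1 divr1 evLX. Qed.

Lemma fext_inv : (forall e, e \in E -> algL iota E (f e)) -> algL iota adjE y ->
  forall z, z \in adjE -> algL iota adjE (fext z).
Proof.
move=> hinv hy z; rewrite mkDCE => /adjP [[P R] hz]; rewrite (fext_rep hz).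
have hP : forall Q, algL iota adjE (evL Q).
  move=> Q; apply: algL_horner => // i; rewrite coef_map /= psiE.
  by apply: (algL_mono sub_adj); apply: hinv; exact: vSFP.
by apply: algebraic_div; apply: hP.
Qed.
End Ext.
Section Choose.
Variables (B : fieldType) (L : closedFieldType) (iota : {rmorphism B -> L}).
Variables (E : divringClosed B) (f : B -> L) (hf : morph_on E f).
Hypothesis hinv : forall e, e \in E -> algL iota E (f e).
Local Notation SE := (subF E).
Local Notation ps := (psi hf).

Lemma evZ x c (P : {poly SE}) : ev x (c *: P) = val c * ev x P.
Proof. by rewrite /ev map_polyZ hornerZ. Qed.
Lemma evD x (P Q : {poly SE}) : ev x (P + Q) = ev x P + ev x Q.
Proof. by rewrite /ev rmorphD hornerD. Qed.
Lemma evLD y (P Q : {poly SE}) : evL hf y (P + Q) = evL hf y P + evL hf y Q.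
Proof. by rewrite /evL rmorphD hornerD. Qed.
Lemma ev0 x : ev x (0 : {poly SE}) = 0. Proof. by rewrite /ev rmorph0 horner0. Qed.
Lemma evL0 y : evL hf y 0 = 0. Proof. by rewrite /evL rmorph0 horner0. Qed.

Lemma minpoly_ex x : algB E x -> exists m : {poly SE},
  [/\ m \is monic, ev x m == 0 & forall p : {poly SE}, p != 0 -> ev x p == 0 -> (size m <= size p)%N].
Proof.
case=> p0 p0nz p0r.
pose Pn := fun n => boolp.asbool (exists p : {poly SE}, [/\ p != 0, ev x p == 0 & size p = n]).
have exP : exists n, Pn n.
  by exists (size p0); apply/boolp.asboolP; exists p0; split.
case: (ex_minnP exP) => n /boolp.asboolP [m0 [m0nz m0r m0s]] hmin.
have lc : lead_coef m0 != 0 by rewrite lead_coef_eq0.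
exists ((lead_coef m0)^-1 *: m0); split.
- by rewrite monicE lead_coefZ mulVf.
- by rewrite evZ (eqP m0r) mulr0.
- move=> p pnz pr; rewrite size_scale ?invr_eq0 // m0s; apply: hmin.
  by apply/boolp.asboolP; exists p; split.
Qed.

Lemma minpoly_H x (m : {poly SE}) y : m \is monic -> ev x m == 0 ->
  (forall p : {poly SE}, p != 0 -> ev x p == 0 -> (size m <= size p)%N) ->
  root (map_poly ps m) y -> forall P, (ev x P == 0) = (evL hf y P == 0).
Proof.
move=> mmon mr mmin my P.
have m0 := monic_neq0 mmon.
have eLm : evL hf y m = 0 by apply/eqP; rewrite /evL -rootE.
apply/idP/idP => hP.
  have hmod : P %% m = 0.
    apply/eqP; apply: contraT => hnz.
    have : ev x (P %% m) == 0.
      have := divp_eq P m => /(congr1 (ev x)); rewrite evD evM (eqP mr) mulr0 add0r.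
      by move <-.
    by move=> /(mmin _ hnz); rewrite leqNgt ltn_modp m0.
  have eP := divp_eq P m; rewrite hmod addr0 in eP.
  by rewrite eP evLM eLm mulr0.
apply: contraTT hP => hP; apply/negP => hL.
pose g := gcdp m P.
have gnz : g != 0 by rewrite gcdp_eq0 negb_and m0.
have gm := dvdp_gcdl m P; have gP := dvdp_gcdr m P.
have eg : ev x g != 0.
  apply: contra hP => hg; rewrite -(divpK gP) evM (eqP hg) mulr0 //.
have egm : ev x (m %/ g) == 0.
  move: (eqP mr); rewrite -{1}(divpK gm) evM => /eqP.
  by rewrite mulf_eq0 (negbTE eg) orbF.
have mgnz : m %/ g != 0.
  by apply: contra m0 => /eqP h; rewrite -(divpK gm) h mul0r.
have hs := mmin _ mgnz egm.
have sg1 : size g == 1%N.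
  move: hs; rewrite -{1}(divpK gm) size_mul // => hs.
  have hb : (size g <= 1)%N by move: hs; rewrite -subn1 leq_subLR [(_ + size g)%N]addnC leq_add2r.
  by rewrite eqn_leq hb size_poly_gt0.
have [[u1 u2] hu] := Bezoutp m P.
have /eqp_size sz := hu; rewrite /= (eqP sg1) in sz.
have /eqP := sz; case/size_poly1P => c cnz hc.
have : evL hf y (u1 * m + u2 * P) = 0.
  by rewrite evLD !evLM eLm (eqP hL) !mulr0 add0r.
rewrite hc evLC => hf0.
have : ps c = 0 by rewrite psiE.
by move/eqP; rewrite fmorph_eq0 (negbTE cnz).
Qed.

Lemma minpoly_root x (m : {poly SE}) : m \is monic -> ev x m == 0 ->
  exists y, root (map_poly ps m) y.
Proof.
move=> mmon mr; apply/closed_rootP; rewrite size_map_poly.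
apply/negP => /size_poly1P [c cnz hc].
move: mmon; rewrite hc monicE lead_coefC => /eqP c1.
by move: mr; rewrite hc c1 ev1 oner_eq0.
Qed.

Lemma minpoly_alg x (m : {poly SE}) y : m \is monic -> root (map_poly ps m) y ->
  algL iota (adjE E x) y.
Proof.
move=> mmon my; apply: (algL_root _ my).
  by rewrite map_poly_eq0 monic_neq0.
move=> i; rewrite coef_map /= psiE.
by apply: (algL_mono (@sub_adj _ E x)); apply: hinv; exact: vSFP.
Qed.

Lemma trans_H x e0 : e0 \in E -> ~ algB E x ->
  forall P, (ev x P == 0) = (evL hf (iota (x + e0)) P == 0).
Proof.
move=> he nx P; have [->|Pnz] := eqVneq P 0; first by rewrite ev0 evL0 !eqxx.
have -> : (ev x P == 0) = false.
  by apply/negP => hP; apply: nx; exists P => //; rewrite rootE.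
apply/esym/negP => hP; apply: nx.
have : algL iota E (iota (x + e0)).
  apply: (@algL_root _ _ _ _ (map_poly ps P)); first by rewrite map_poly_eq0.
    by rewrite rootE.
  by move=> i; rewrite coef_map /= psiE; apply: hinv; exact: vSFP.
move=> /algL_B hx.
have -> : x = (x + e0) - val (mkSF he) by rewrite /= addrK.
by apply: algebraic_sub => //; apply: algebraic_id.
Qed.

Lemma trans_alg x e0 : e0 \in E -> algL iota (adjE E x) (iota (x + e0)).
Proof.
move=> he; apply: algL_iota; rewrite rpredD //; first exact: x_adj.
exact: sub_adj.
Qed.
End Choose.
Section TotM.
Variables (B : fieldType) (L : closedFieldType) (f : B -> L)
  (h : morph_on (fun _ : B => true) f).
Definition totm (z : B) : L := let _ := h in f z.
Lemma totm_zmod : zmod_morphism totm.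
Proof. by move=> u v; rewrite /totm (moB h). Qed.
Lemma totm_mon : monoid_morphism totm.
Proof. rewrite /monoid_morphism /totm; split; first exact: (mo1 h). by move=> u v; rewrite (moM h). Qed.
HB.instance Definition _ := GRing.isZmodMorphism.Build _ _ totm totm_zmod.
HB.instance Definition _ := GRing.isMonoidMorphism.Build _ _ totm totm_mon.
End TotM.

Section DC.
Variables (F : fieldType) (E : {pred F}) (pf : divring_closed E).
Lemma dc1 : 1 \in E. Proof. exact: (@rpred1 _ (mkDC pf)). Qed.
Lemma dc0 : 0 \in E. Proof. exact: (@rpred0 _ (mkDC pf)). Qed.
Lemma dcB x y : x \in E -> y \in E -> x - y \in E. Proof. exact: (@rpredB _ (mkDC pf)). Qed.
Lemma dcM x y : x \in E -> y \in E -> x * y \in E. Proof. exact: (@rpredM _ (mkDC pf)). Qed.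
Lemma dcD x y : x \in E -> y \in E -> x / y \in E. Proof. exact: (@rpred_div _ (mkDC pf)). Qed.
End DC.

Section ZornS.
Variables (B : fieldType) (L : closedFieldType) (iota : {rmorphism B -> L}).

Record pemb := PE { pd : B -> bool; pf : B -> L }.
Definition good (e : pemb) := exists pfc : divring_closed (pd e),
  morph_on (pd e) (pf e) /\ (forall z, z \in pd e -> algL iota (mkDC pfc) (pf e z)).
Definition le (e1 e2 : pemb) := {subset pd e1 <= pd e2} /\ {in pd e1, forall z, pf e1 z = pf e2 z}.

Lemma le_refl e : le e e. Proof. by split. Qed.
Lemma le_trans e1 e2 e3 : le e1 e2 -> le e2 e3 -> le e1 e3.
Proof.
move=> [s12 f12] [s23 f23]; split=> [z /s12 /s23 //|z hz].
by rewrite f12 // f23 // s12.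
Qed.

Lemma extend_any e (he : good e) x : exists e', [/\ good e', le e e' & x \in pd e'].
Proof.
case: he => pfc [hf0 hinv0].
pose E := mkDC pfc.
have hf : morph_on E (pf e) by [].
have hinv : forall z, z \in E -> algL iota E (pf e z) by [].
have step : forall y, (forall P, (ev x P == 0) = (evL hf y P == 0)) ->
    algL iota (adjE E x) y ->
    exists e', [/\ good e', le e e' & x \in pd e'].
  move=> y H hy; exists (PE (adj_pred E x) (fext hf x y)); split => /=.
  - exists (adj_closed E x); split; first exact: fext_morph.
    exact: fext_inv.
  - split; first exact: (@sub_adj _ E x).
    by move=> z hz /=; rewrite fext_E.
  - exact: (@x_adj _ E x).
case: (boolp.pselect (algB E x)) => [ax|nx].
  have [m [mmon mr mmin]] := minpoly_ex ax.
  have [y my] := minpoly_root hf mmon mr.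
  apply: (step y); first exact: (minpoly_H mmon mr mmin my).
  exact: (minpoly_alg hinv x mmon my).
apply: (step (iota (x + 0))); first exact: (trans_H hf hinv (rpred0 _) nx).
exact: (trans_alg iota x (rpred0 _)).
Qed.
End ZornS.
Section ChainS.
Variables (B : fieldType) (L : closedFieldType) (iota : {rmorphism B -> L}).
Local Notation good := (good iota).
Variables (S : pemb B L -> Prop) (e0 : pemb B L) (S0 : S e0)
  (Sg : forall s, S s -> good s) (St : forall s t, S s -> S t -> le s t \/ le t s).

Definition Upred : {pred B} := fun z => boolp.asbool (exists s, S s /\ z \in pd s).
Lemma UP z : (z \in Upred) <-> exists s, S s /\ z \in pd s.
Proof. by rewrite unfold_in /Upred; split => [/boolp.asboolP|h]; last apply/boolp.asboolP. Qed.

Lemma gdc s : S s -> divring_closed (pd s).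
Proof. by move=> /Sg [pfc _]. Qed.

Lemma two_in z1 z2 : z1 \in Upred -> z2 \in Upred ->
  exists r, [/\ S r, z1 \in pd r & z2 \in pd r].
Proof.
move=> /UP [s [Ss h1]] /UP [t [St' h2]].
case: (St Ss St') => [[sub _]|[sub _]]; first by exists t; rewrite h2 sub.
by exists s; rewrite h1 sub.
Qed.

Lemma U_closed : divring_closed Upred.
Proof.
split; first by apply/UP; exists e0; rewrite (dc1 (gdc S0)).
  move=> z1 z2 h1 h2; have [r [Sr i1 i2]] := two_in h1 h2.
  by apply/UP; exists r; rewrite (dcB (gdc Sr)).
move=> z1 z2 h1 h2; have [r [Sr i1 i2]] := two_in h1 h2.
by apply/UP; exists r; rewrite (dcD (gdc Sr)).
Qed.

Definition fU (z : B) : L :=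
  match boolp.pselect (exists s, S s /\ z \in pd s) with
  | left h => pf (sval (boolp.cid h)) z
  | right _ => 0 end.

Lemma fU_eq s z : S s -> z \in pd s -> fU z = pf s z.
Proof.
move=> Ss hz; rewrite /fU; case: boolp.pselect => [h|nh]; last by exfalso; apply: nh; exists s.
case: (boolp.cid h) => t [St' hzt] /=.
by case: (St Ss St') => [[_ e]|[_ e]]; rewrite ?e.
Qed.

Lemma sub_U s : S s -> {subset pd s <= Upred}.
Proof. by move=> Ss z hz; apply/UP; exists s. Qed.

Lemma U_good : good (PE Upred fU).
Proof.
exists U_closed; split; [split|] => /=.
- rewrite (fU_eq S0 (dc1 (gdc S0))); by case: (Sg S0) => ? [[]].
- move=> z1 z2 h1 h2; have [r [Sr i1 i2]] := two_in h1 h2.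
  rewrite (fU_eq Sr i1) (fU_eq Sr i2) (fU_eq Sr (dcB (gdc Sr) i1 i2)).
  by case: (Sg Sr) => ? [[_ hB _] _]; apply: hB.
- move=> z1 z2 h1 h2; have [r [Sr i1 i2]] := two_in h1 h2.
  rewrite (fU_eq Sr i1) (fU_eq Sr i2) (fU_eq Sr (dcM (gdc Sr) i1 i2)).
  by case: (Sg Sr) => ? [[_ _ hM] _]; apply: hM.
- move=> z /UP [s [Ss hz]]; rewrite (fU_eq Ss hz).
  case: (Sg Ss) => pfc [_ hi].
  by apply: (@algL_mono _ _ _ (mkDC pfc) (mkDC U_closed) (sub_U Ss)); apply: hi.
Qed.

Lemma U_ub s : S s -> le s (PE Upred fU).
Proof. by move=> Ss; split; [exact: sub_U | move=> z hz /=; rewrite (fU_eq Ss hz)]. Qed.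
End ChainS.
Section ZornApp.
Variables (B : fieldType) (L : closedFieldType) (iota : {rmorphism B -> L}).
Variables (e0 : pemb B L) (g0 : good iota e0).

Lemma max_ext : exists h : {rmorphism B -> L}, {in pd e0, forall z, h z = pf e0 z}.
Proof.
pose T := {e : pemb B L | good iota e /\ le e0 e}.
pose R := fun s t : T => boolp.asbool (le (sval s) (sval t)).
have t0 : T := exist _ e0 (conj g0 (le_refl e0)).
have [t tmax] : exists t, forall s, R t s -> R s t.
  refine (@classical_sets.ZL_preorder T t0 R _ _ _).
  - by move=> s; apply/boolp.asboolP; exact: le_refl.
  - move=> r s u /boolp.asboolP h1 /boolp.asboolP h2; apply/boolp.asboolP.
    exact: le_trans h1 h2.
  move=> A tot.
  pose S := fun e => (exists2 s, A s & sval s = e) \/ e = e0.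
  have S0 : S e0 by right.
  have Sg : forall s, S s -> good iota s.
    by move=> s [[s' _ <-]|->] //; case: (svalP s').
  have St : forall s u, S s -> S u -> le s u \/ le u s.
    move=> s u [[s' As' <-]|->] [[u' Au' <-]|->].
    - by case: (tot _ _ As' Au') => /boolp.asboolP h; [left|right].
    - by right; case: (svalP s').
    - by left; case: (svalP u').
    - by left; exact: le_refl.
  have gu := U_good S0 Sg St.
  have leu : le e0 (PE (Upred S) (fU S)) by exact: (U_ub St S0).
  exists (exist (fun e => good iota e /\ le e0 e) (PE (Upred S) (fU S)) (conj gu leu)) => s As.
  apply/boolp.asboolP => /=.
  by apply: (U_ub St); left; exists s.
have allin : forall x, x \in pd (sval t).
  move=> x; case: (svalP t) => gt let0.
  have [e' [ge' le' xe']] := extend_any gt x.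
  pose s : T := exist _ e' (conj ge' (le_trans let0 le')).
  have hts : R t s by apply/boolp.asboolP.
  have /boolp.asboolP [sub _] := tmax s hts.
  exact: sub.
case: (svalP t) => [[_ [[h1 hB hM] _]] [_ hfe]].
have hm : morph_on (fun _ : B => true) (pf (sval t)).
  by split => // u v _ _; [apply: hB | apply: hM]; apply: allin.
by exists (totm hm) => z hz; rewrite /= /totm hfe.
Qed.
End ZornApp.
Lemma prod_nseq (R : comNzRingType) (d : nat) (b : R) (F : R -> R) :
  \prod_(p <- nseq d b) F p = F b ^+ d.
Proof. by rewrite big_nseq; elim: d => [|d IH] //=; rewrite IH exprS. Qed.
Lemma sum_nseq (R : comNzRingType) (d : nat) (b : R) :
  \sum_(p <- nseq d b) p = b *+ d.
Proof. by rewrite big_nseq; elim: d => [|d IH] //=; rewrite IH mulrS. Qed.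

Lemma coefXsubCn (R : comNzRingType) (b : R) d : (0 < d)%N ->
  (('X - b%:P) ^+ d)`_d.-1 = - (b *+ d).
Proof.
move=> d0.
have -> : ('X - b%:P) ^+ d = \prod_(p <- nseq d b) ('X - p%:P).
  by rewrite big_nseq; elim: (d) => [|k IH] //=; rewrite -IH exprS.
have := @coefPn_prod_XsubC R (nseq d b).
by rewrite size_nseq -lt0n d0 sum_nseq => ->.
Qed.

Lemma insep (B : fieldType) (A : {pred B}) (pfA : divring_closed A) d (b : B) :
  (0 < d)%N -> (forall i, (('X - b%:P) ^+ d)`_i \in A) ->
  exists n, b ^+ (ce B ^ n)%N \in A.
Proof.
elim: d {-2}d (leqnn d) b => [|D IH] d hd b; first by move: hd; rewrite leqn0 => /eqP ->.
move=> d0 hc.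
have [dnz|dz] := eqVneq (d%:R : B) 0; last first.
  exists 0%N; rewrite expn0 expr1.
  have := hc d.-1; rewrite coefXsubCn // => hb.
  have hbd : b *+ d \in A by move: hb; rewrite (@rpredN _ (mkDC pfA)).
  have -> : b = (b *+ d) / d%:R by rewrite -(mulr_natr b d) mulfK.
  apply: (dcD pfA) => //; exact: (@rpred_nat _ (mkDC pfA) d).
case: (ceP B) => [Bq|[_ nB]]; last first.
  have c0 : has_char0 B by move=> p; rewrite (negbTE (nB p)).
  by move/eqP: dnz; rewrite ((pcharf0P B).1 c0 d) => /eqP dd; move: d0; rewrite dd.
set p := ce B in Bq *.
have pp := pcharf_prime Bq.
have : (p %| d)%N by rewrite (dvdn_pcharf Bq) dnz eqxx.
case/dvdnP => e de.
have e0 : (0 < e)%N by move: d0; rewrite de muln_gt0 => /andP[].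
have p1 : (1 < p)%N := prime_gt1 pp.
have eD : (e <= D)%N.
  move: hd; rewrite de => h; have : (e * 2 <= e * p)%N by rewrite leq_mul2l p1 orbT.
  lia.
have Pp : p \in [pchar {poly B}] by rewrite (rmorph_pchar polyC).
have hX : ('X - b%:P) ^+ p = 'X^p - (b ^+ p)%:P.
  rewrite (exprDn_pchar _ _ (n := p)); last by rewrite (pnatE _ pp).
  by rewrite (exprNn_pchar _ (n := p)) ?(pnatE _ pp) // rmorphXn.
have hQ : ('X - b%:P) ^+ d = ('X - (b ^+ p)%:P) ^+ e \Po 'X^p.
  rewrite de mulnC exprM hX; elim: (e) => [|k IHk]; first by rewrite !expr0 comp_polyC.
  by rewrite !exprS comp_polyM -IHk comp_polyB comp_polyX comp_polyC.
have hc' : forall i, (('X - (b ^+ p)%:P) ^+ e)`_i \in A.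
  move=> i; have := hc (i * p)%N; rewrite hQ coef_comp_poly_Xn ?prime_gt0 //.
  by rewrite dvdn_mull // mulnK ?prime_gt0.
have [n hn] := IH e eD (b ^+ p) e0 hc'.
by exists n.+1; rewrite expnS exprM.
Qed.

Lemma all_roots_eq (L : closedFieldType) (P : {poly L}) (c : L) :
  P \is monic -> (forall z, root P z -> z = c) -> P = ('X - c%:P) ^+ (size P).-1.
Proof.
move: {2}(size P) (erefl (size P)) => n; elim: n P => [|n IH] P sP mP hr.
  by move: (monic_neq0 mP); rewrite -size_poly_eq0 sP.
have [s1|sn1] := eqVneq (size P) 1%N.
  have /size_poly1P [c0 c0nz hc0] : size P == 1%N by rewrite s1.
  move: mP; rewrite hc0 monicE lead_coefC => /eqP ->.
  by rewrite size_polyC oner_eq0 /= expr0.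
have [z hz] := closed_rootP P sn1.
have zc := hr _ hz; rewrite zc in hz.
case/factor_theorem: hz => Q hPQ.
have mQ : Q \is monic by rewrite -(monicMr Q (monicXsubC c)) -hPQ.
have Q0 := monic_neq0 mQ.
have sQ : size Q = n.
  move: sP; rewrite hPQ size_mul ?polyXsubC_eq0 // size_XsubC addn2 /=.
  by case.
have n0 : (0 < n)%N by rewrite -sQ size_poly_gt0.
have hrQ : forall w, root Q w -> w = c by move=> w hw; apply: hr; rewrite hPQ rootM hw.
have eQ := IH Q sQ mQ hrQ.
rewrite sQ in eQ; rewrite sP -pred_Sn; apply: (etrans hPQ).
rewrite eQ -exprSr prednK //.
Qed.
Lemma hard_dir (B : fieldType) (A : {pred B}) (A_subfield : divring_closed A)
    (L : closedFieldType) (iota : {rmorphism B -> L}) (b : B) :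
  dominion_F A b -> exists n, b ^+ (ce B ^ n)%N \in A.
Proof.
move=> hdom; apply: boolp.contrapT => nn.
pose EA := mkDC A_subfield.
have hfA : morph_on EA iota.
  by split; [exact: rmorph1 | move=> u v _ _; exact: rmorphB | move=> u v _ _; exact: rmorphM].
have hinvA : forall z, z \in EA -> algL iota EA (iota z) by move=> z hz; exact: algL_iota.
have psiA : forall u, psi hfA u = iota (val u) by [].
have [y [H hy yb]] : exists y, [/\ (forall P, (ev b P == 0) = (evL hfA y P == 0)),
    algL iota (adjE EA b) y & y != iota b].
  case: (boolp.pselect (algB EA b)) => [ax|nx]; last first.
    exists (iota (b + 1)); split.
    - exact: (trans_H hfA hinvA (rpred1 _) nx).
    - exact: (trans_alg iota b (rpred1 _)).
    - by rewrite (inj_eq (fmorph_inj iota)) -subr_eq0 addrC addKr oner_eq0.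
  have [m [mmon mr mmin]] := minpoly_ex ax.
  have mL : map_poly (psi hfA) m = map_poly iota (map_poly val m).
    by rewrite -map_poly_comp; apply: eq_map_poly.
  suff [y my yb] : exists2 y, root (map_poly (psi hfA) m) y & y != iota b.
    exists y; split => //; first exact: (minpoly_H mmon mr mmin my).
    exact: (minpoly_alg hinvA b mmon my).
  apply: boolp.contrapT => hno.
  have hall : forall z, root (map_poly (psi hfA) m) z -> z = iota b.
    move=> z hz; apply: boolp.contrapT => hzb; apply: hno; exists z => //.
    exact/eqP.
  have mon' : map_poly (psi hfA) m \is monic by rewrite map_monic.
  have e1 := all_roots_eq mon' hall.
  rewrite size_map_poly mL -map_polyXsubC -rmorphXn in e1.
  have e2 := map_poly_inj iota e1.
  have sm : (1 < size m)%N.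
    have s0 : (0 < size m)%N by rewrite size_poly_gt0 monic_neq0.
    have s1 : size m != 1%N.
      apply/negP => /size_poly1P [c cnz hc].
      move: mmon; rewrite hc monicE lead_coefC => /eqP c1.
      by move: mr; rewrite hc c1 ev1 oner_eq0.
    by move: s0 s1; case: (size m) => [|[|k]].
  apply: nn; apply: (@insep B A A_subfield (size m).-1 b); first by rewrite -ltnS prednK // ltnW.
  by move=> i; rewrite -e2 coef_map /=; exact: vSFP.
pose e0 := PE (adj_pred EA b) (fext hfA b y).
have g0 : good iota e0.
  exists (adj_closed EA b); split; first exact: fext_morph.
  exact: fext_inv.
have [h hh] := max_ext g0.
have agree : {in A, forall a, iota a = h a}.
  move=> a ha; rewrite hh /=; last exact: (@sub_adj _ EA b).
  by rewrite fext_E.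
have := hdom L iota h agree.
rewrite hh /=; last exact: (@x_adj _ EA b).
by rewrite (fext_x H) => eb; move: yb; rewrite eb eqxx.
Qed.

Theorem mainTheorem9 (B : fieldType) (A : {pred B}) (A_subfield : divring_closed A)
    (L : closedFieldType) (iota : {rmorphism B -> L}) (iota_acl : is_acl iota) :
  forall b : B,
    dominion_F A b <-> Sg_plus (fun y : L => exists2 a, a \in A & y = iota a) (iota b).
Proof.
move=> b; split.
  by move=> /(hard_dir A_subfield iota) [n hn]; exact: (@cond_Sg _ _ _ iota _ _ hn).
by move=> /(Sg_sub A_subfield) [n hn]; exact: (@dom_of _ _ _ _ hn).
Qed.
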